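(* Let $\mathcal X,\mathcal C,d$ be as in the context, $\epsilon\in[0,1]$, $N\ge1$, and let $\mathcal B$ be any set of $M$ vectors $b\in\{-1,1\}^d$ satisfying $\sum_{y\in C}b_{(y,C)}=0$ for all $C\in\mathcal C$ and $\sum_{C\in\mathcal C,\,C\ni x}b_{(x,C)}=0$ for all $x\in\mathcal X$. Let $\mathbb P_0=p_0^N$ and $\mathbb P_1=\frac1M\sum_{b\in\mathcal B}q_{b,\epsilon}^N$. Then $$\chi^2(\mathbb P_1,\mathbb P_0)+1\le\frac1{M^2}\sum_{b,b'\in\mathcal B}\exp\Big(\frac{N\epsilon^2}{d}b^Tb'\Big).$$
   Context: $\mathcal X$ is a finite set of $n$ items, $\mathcal C$ a collection of distinct subsets of $\mathcal X$ of size at least 2, $d=\sum_{C\in\mathcal C}|C|$, and vectors/distributions in dimension $d$ are indexed by pairs $(x,C)$ with $x\in C\in\mathcal C$. $p_0$ is the uniform distribution on these $d$ pairs, and for $b$ as in the claim $q_{b,\epsilon}((x,C))=\frac1d+\frac{\epsilon b_{(x,C)}}d$. For a distribution $\mu$, $\mu^N$ is the law of $N$ i.i.d. samples. For distributions $P,Q$ on a finite set, $\chi^2(P,Q)=\mathbb E_Q[(dP/dQ)^2]-1$. *)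

(* Defs.v *)
From mathcomp Require Import all_boot all_order all_algebra.
From mathcomp Require Import reals sequences exp.
Set Implicit Arguments. Unset Strict Implicit. Unset Printing Implicit Defensive.
Import Order.TTheory GRing.Theory Num.Theory.
Local Open Scope ring_scope.

Definition pairIdx (X : finType) (Cc : {set {set X}}) : Type :=
  {p : X * {set X} | (p.2 \in Cc) && (p.1 \in p.2)}.

Section Defs.
Variables (R : realType) (X : finType) (Cc : {set {set X}}).
Local Notation I := (pairIdx Cc).

Definition dimd : nat := #|{: I}|.

Definition p0 (i : I) : R := 1 / (dimd%:R).

Definition qbe (b : {ffun I -> R}) (eps : R) (i : I) : R :=
  1 / (dimd%:R) + eps * b i / (dimd%:R).

Definition prodlaw (mu : I -> R) (N : nat) (w : {ffun 'I_N -> I}) : R :=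
  \prod_(k < N) mu (w k).

Definition mixture (B : seq {ffun I -> R}) (eps : R) (N : nat)
  (w : {ffun 'I_N -> I}) : R :=
  (size B)%:R^-1 * \sum_(b <- B) prodlaw (qbe b eps) w.

Definition dotv (b b' : {ffun I -> R}) : R := \sum_i b i * b' i.

Definition admissible (b : {ffun I -> R}) : Prop :=
  (forall i, b i = 1 \/ b i = -1) /\
  (forall C, C \in Cc -> \sum_(i : I | (val i).2 == C) b i = 0) /\
  (forall x : X, \sum_(i : I | (val i).1 == x) b i = 0).
End Defs.

Definition chi2 (R : realType) (T : finType) (P Q : T -> R) : R :=
  \sum_(t : T) Q t * (P t / Q t) ^+ 2 - 1.

(* Main.v *)
Require Import Defs.
From mathcomp Require Import all_boot all_order all_algebra.
From mathcomp Require Import reals sequences exp.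
From mathcomp Require Import ring lra.
Import Order.TTheory GRing.Theory Num.Theory.
Local Open Scope ring_scope.

Lemma sum_b0 (R : realType) (X : finType) (Cc : {set {set X}})
  (b : {ffun pairIdx Cc -> R}) : admissible b -> \sum_i b i = 0.
Proof.
move=> [_ [_ h]].
rewrite (partition_big (fun i : pairIdx Cc => (val i).1) predT) //=.
apply: big1 => x _; exact: h x.
Qed.

Lemma prodsum (R : realType) (I : finType) N (mu : I -> R) :
  \sum_(w : {ffun 'I_N -> I}) \prod_(k < N) mu (w k) = (\sum_i mu i) ^+ N.
Proof.
rewrite -(bigA_distr_bigA (fun (_ : 'I_N) i => mu i)) /=.
by rewrite prodr_const card_ord.
Qed.

Lemma ler_sum_seq (R : realType) (I : eqType) (r : seq I) (F G : I -> R) :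
  (forall i, i \in r -> F i <= G i) -> \sum_(i <- r) F i <= \sum_(i <- r) G i.
Proof.
move=> h; rewrite big_seq [X in _ <= X]big_seq; apply: ler_sum => i; exact: h.
Qed.

Theorem lemma5p1 (R : realType) (X : finType) (Cc : {set {set X}})
  (hC : forall C, C \in Cc -> (2 <= #|C|)%N)
  (eps : R) (heps : 0 <= eps <= 1) (N : nat) (hN : (1 <= N)%N)
  (B : seq {ffun pairIdx Cc -> R}) (huniq : uniq B)
  (hB : forall b, b \in B -> admissible b) :
  chi2 (mixture B eps (N:=N)) (prodlaw (@p0 R X Cc) (N:=N)) + 1 <=
  (size B)%:R ^- 2 *
    \sum_(b <- B) \sum_(b' <- B)
      expR (N%:R * eps ^+ 2 / (dimd Cc)%:R * dotv b b').
Proof.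
rewrite /chi2 subrK.
have rhs0 : 0 <= (size B)%:R ^- 2 *
    \sum_(b <- B) \sum_(b' <- B)
      expR (N%:R * eps ^+ 2 / (dimd Cc)%:R * dotv b b').
  by rewrite mulr_ge0 ?invr_ge0 ?exprn_ge0 // !sumr_ge0 // => b _; rewrite sumr_ge0 // => *; exact: expR_ge0.
have [d0|dn0] := eqVneq (dimd Cc) 0%N.
  rewrite big1 // => w _; clear rhs0.
  rewrite /prodlaw; case: N hN w => // n _ w.
  by rewrite big_ord_recl /p0 d0 div1r invr0 mul0r mul0r.
set d := dimd Cc.
have dR : (d%:R : R) != 0 by rewrite pnatr_eq0.
set M := (size B)%:R : R.
have Q (w : {ffun 'I_N -> pairIdx Cc}) : prodlaw (@p0 R X Cc) w = (d%:R^-1) ^+ N.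
  by rewrite /prodlaw /p0 div1r prodr_const; congr (_ ^+ _); exact: card_ord.
have step : \sum_(w : {ffun 'I_N -> pairIdx Cc}) prodlaw (@p0 R X Cc) w * (mixture B eps w / prodlaw (@p0 R X Cc) w) ^+ 2
   = \sum_(w : {ffun 'I_N -> pairIdx Cc}) M ^- 2 * \sum_(b <- B) \sum_(b' <- B)
        (d%:R ^+ N * (prodlaw (qbe b eps) w * prodlaw (qbe b' eps) w)).
  apply: eq_bigr => w _; rewrite Q /mixture -/M.
  set S := \sum_(b <- B) prodlaw (qbe b eps) w.
  have -> : (d%:R^-1) ^+ N * (M^-1 * S / (d%:R^-1) ^+ N) ^+ 2 = M ^- 2 * (d%:R ^+ N * (S * S)).
    rewrite -exprVn !exprVn; set m := M^-1.
    have : (d%:R ^+ N : R) != 0 by rewrite expf_neq0.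
    set Dn : R := d%:R ^+ N => hD.
    have -> : M ^- 2 = m ^+ 2 by rewrite /m exprVn.
    by field.
  congr (_ * _); rewrite /S big_distrl /= mulr_sumr; apply: eq_bigr => b _.
  by rewrite big_distrr /= mulr_sumr.
rewrite step -mulr_sumr; apply: ler_wpM2l; first by rewrite invr_ge0 exprn_ge0.
rewrite exchange_big /=; apply: ler_sum_seq => b bB; rewrite exchange_big /=.
apply: ler_sum_seq => b' b'B.
rewrite -mulr_sumr.
under eq_bigr do rewrite /prodlaw -big_split /=.
rewrite (@prodsum R _ N (fun i => qbe b eps i * qbe b' eps i)) -exprMn.
have hb := hB b bB; have hb' := hB b' b'B.
have qn (c : {ffun pairIdx Cc -> R}) i : admissible c -> 0 <= qbe c eps i.
  move=> [hc _]; rewrite /qbe -mulrDl divr_ge0 //.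
  case: (hc i) => ->; case/andP: heps => ? ?; lra.
have hnn : 0 <= d%:R * \sum_i qbe b eps i * qbe b' eps i.
  by rewrite mulr_ge0 ?ler0n // sumr_ge0 // => i _; rewrite mulr_ge0 ?qn.
have E : d%:R * \sum_i qbe b eps i * qbe b' eps i = 1 + eps ^+ 2 / d%:R * dotv b b'.
  have e i : qbe b eps i * qbe b' eps i = d%:R^-2 + (eps * d%:R^-2) * b i
       + (eps * d%:R^-2) * b' i + (eps ^+ 2 * d%:R ^-2) * (b i * b' i).
    by rewrite /qbe; field.
  under eq_bigr do rewrite e.
  rewrite !big_split /= -!mulr_sumr !sum_b0 // sumr_const /dotv.
  have -> : #|[pred i : pairIdx Cc | true]| = d by [].
  by rewrite -mulr_natr; field.
rewrite E in hnn *.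
have -> : N%:R * eps ^+ 2 / d%:R * dotv b b' = N%:R * (eps ^+ 2 / d%:R * dotv b b') by rewrite !mulrA.
rewrite expRM_natl; apply: lerXn2r; rewrite ?nnegrE ?expR_ge0 ?expR_ge1Dx //.
Qed.
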